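(* Let $(s_n)$ be a sequence in $\mathbb{R}^{\mathbb{Z}_<}$ all of whose members are real numbers (i.e. every coefficient other than the $\epsilon^0$-coefficient is zero). Then $(s_n)$ is hyper-Cauchy if and only if there exists $N\in\mathbb{N}$ such that $s_m=s_N$ for all $m\ge N$.
   Context: $\mathbb{R}^{\mathbb{Z}_<}$ is the set of formal series $\sum_{i\ge -k}a_i\epsilon^i$ ($k\in\mathbb{N}\cup\{0\}$, $a_i\in\mathbb{R}$), with coefficientwise addition, Cauchy-product multiplication and lexicographic order ($\mathbf{x}<\mathbf{y}$ iff at the least index where coefficients differ, $\mathbf{x}$'s is smaller); $|\cdot|$ is the associated absolute value; $\epsilon=\langle\widehat0,1,0,\dots\rangle$. $(s_n)$ is hyper-Cauchy iff for every $\iota\in\mathbb{R}^{\mathbb{Z}_<}$ with $\iota>0$ there is $N\in\mathbb{N}$ such that $|s_l-s_m|<\iota$ for all $l,m\ge N$. *)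

(* Defs.v *)
(* the field R^{Z_<} of formal Laurent series in epsilon
   with finitely many negative powers and real coefficients. *)
From Stdlib Require Import Reals Lra Lia ZArith ClassicalEpsilon.
Open Scope R_scope.

Definition LS : Type :=
  { a : Z -> R | exists k : nat, forall i : Z, (i < - Z.of_nat k)%Z -> a i = 0 }.

Definition coef (x : LS) : Z -> R := proj1_sig x.

Lemma LS_zero_prop : exists k : nat, forall i : Z, (i < - Z.of_nat k)%Z -> (fun _ : Z => 0) i = 0.
Proof. exists 0%nat. reflexivity. Qed.

Definition ls_zero : LS := exist _ (fun _ => 0) LS_zero_prop.

Lemma LS_opp_prop (x : LS) :
  exists k : nat, forall i : Z, (i < - Z.of_nat k)%Z -> (fun i => - coef x i) i = 0.
Proof.
  destruct x as [a [k Hk]]; exists k; intros i Hi; simpl; rewrite (Hk i Hi); lra.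
Qed.

Definition ls_opp (x : LS) : LS := exist _ (fun i => - coef x i) (LS_opp_prop x).

Lemma LS_sub_prop (x y : LS) :
  exists k : nat, forall i : Z, (i < - Z.of_nat k)%Z ->
    (fun i => coef x i - coef y i) i = 0.
Proof.
  destruct x as [a [k Hk]]; destruct y as [b [l Hl]]; exists (Nat.max k l).
  intros i Hi; simpl; rewrite (Hk i), (Hl i); try lra; lia.
Qed.

Definition ls_sub (x y : LS) : LS :=
  exist _ (fun i => coef x i - coef y i) (LS_sub_prop x y).

Definition ls_lt (x y : LS) : Prop :=
  exists i : Z, (forall j : Z, (j < i)%Z -> coef x j = coef y j) /\ coef x i < coef y i.

Definition ls_abs (x : LS) : LS :=
  match excluded_middle_informative (ls_lt x ls_zero) with
  | left _ => ls_opp x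
  | right _ => x
  end.

Definition ls_is_real (x : LS) : Prop := forall i : Z, i <> 0%Z -> coef x i = 0.

Definition hyper_cauchy (s : nat -> LS) : Prop :=
  forall iota : LS, ls_lt ls_zero iota ->
    exists N : nat, forall l m : nat, (N <= l)%nat -> (N <= m)%nat ->
      ls_lt (ls_abs (ls_sub (s l) (s m))) iota.

(* Main.v *)
Require Import Defs.
From Stdlib Require Import Reals ZArith Lra Lia ProofIrrelevance FunctionalExtensionality ClassicalEpsilon.

Lemma abs_cases (x : LS) :
  (ls_lt x ls_zero /\ forall i, coef (ls_abs x) i = - coef x i) \/
  (~ ls_lt x ls_zero /\ forall i, coef (ls_abs x) i = coef x i).
Proof.
  unfold ls_abs. destruct (excluded_middle_informative (ls_lt x ls_zero)) as [h|h].
  - left. split; [exact h | intros; reflexivity].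
  - right. split; [exact h | intros; reflexivity].
Qed.

Definition eps_fun (i : Z) : R := if Z.eq_dec i 1 then 1 else 0.
Lemma eps_prop : exists k : nat, forall i : Z, (i < - Z.of_nat k)%Z -> eps_fun i = 0.
Proof. exists 0%nat. intros i Hi. unfold eps_fun. destruct (Z.eq_dec i 1); [lia|reflexivity]. Qed.
Definition eps : LS := exist _ eps_fun eps_prop.

Lemma ls_ext (x y : LS) : (forall i, coef x i = coef y i) -> x = y.
Proof.
  destruct x as [a pa], y as [b pb]; unfold coef; simpl; intros H.
  assert (a = b) by (apply functional_extensionality; exact H). subst.
  f_equal. apply proof_irrelevance.
Qed.

Theorem mainTheorem18 (s : nat -> LS) (Hreal : forall n : nat, ls_is_real (s n)) :
  hyper_cauchy s <-> exists N : nat, forall m : nat, (N <= m)%nat -> s m = s N.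
Proof.
  split.
  - intros H. destruct (H eps) as [N HN].
    { exists 1%Z. split.
      - intros j Hj. simpl. unfold eps_fun. destruct (Z.eq_dec j 1); [lia|reflexivity].
      - simpl. unfold eps_fun. destruct (Z.eq_dec 1 1); [lra|congruence]. }
    exists N. intros m Hm. apply ls_ext. intros i.
    specialize (HN m N Hm (le_n N)).
    set (d := ls_sub (s m) (s N)) in HN.
    assert (Hd : forall j, j <> 0%Z -> coef d j = 0).
    { intros j Hj. simpl. rewrite (Hreal m j Hj), (Hreal N j Hj). lra. }
    assert (Ha : coef d 0%Z = 0).
    { destruct HN as [k [Hk1 Hk2]].
      assert (Hpos : forall j, coef (ls_abs d) j = 0 \/ j = 0%Z).
      { intros j. destruct (Z.eq_dec j 0); [right; auto|left].
        destruct (abs_cases d) as [[_ E]|[_ E]]; rewrite E, (Hd j n); lra. }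
      assert (H0 : 0 <= coef (ls_abs d) 0%Z /\
                   (coef (ls_abs d) 0%Z = 0 -> coef d 0%Z = 0)).
      { destruct (abs_cases d) as [[L E]|[L E]]; rewrite E.
        - destruct L as [k' [L1 L2]]. unfold ls_zero, coef at 2 in L2; simpl in L2.
          destruct (Z.eq_dec k' 0) as [->|nk]; [unfold d in *; simpl in *; split; lra|].
          pose proof (Hd k' nk) as Z'; unfold d in *; simpl in *; lra.
        - destruct (Rlt_le_dec (coef d 0%Z) 0) as [c|c]; [|unfold d in *; simpl in *; split; lra].
          exfalso. apply L. exists 0%Z. split; [|simpl; exact c].
          intros j Hj. simpl. apply Hd. lia. }
      simpl in Hk2. unfold eps_fun in Hk2.
      destruct (Z_lt_le_dec k 0) as [c|c].
      + destruct (Hpos k) as [e|e]; [|lia]. rewrite e in Hk2.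
        destruct (Z.eq_dec k 1); [lia|lra].
      + destruct (Z.eq_dec k 0) as [->|nk].
        * destruct (Z.eq_dec 0 1); [lia|lra].
        * apply H0. specialize (Hk1 0%Z ltac:(lia)). rewrite Hk1. simpl.
          unfold eps_fun. destruct (Z.eq_dec 0 1); [lia|reflexivity]. }
    destruct (Z.eq_dec i 0) as [->|ni].
    + simpl in Ha. lra.
    + rewrite (Hreal m i ni), (Hreal N i ni). reflexivity.
  - intros [N HN] iota [k [Hk1 Hk2]]. exists N. intros l m Hl Hm.
    rewrite (HN l Hl), (HN m Hm).
    assert (Z0 : forall j, coef (ls_abs (ls_sub (s N) (s N))) j = 0).
    { intros j. destruct (abs_cases (ls_sub (s N) (s N))) as [[_ E]|[_ E]];
        rewrite E; simpl; lra. }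
    exists k. split.
    + intros j Hj. rewrite Z0. rewrite <- (Hk1 j Hj). reflexivity.
    + rewrite Z0. exact Hk2.
Qed.
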